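(* Let $A$ be a locally-complex Cayley--Dickson algebra and $f(x)\in A[x]$ a polynomial of degree $n$. Then the set of spherical roots of $f(x)$ is a union of at most $\lfloor n/2\rfloor$ quadratic-equivalence classes.
   Context: Real Cayley--Dickson algebras: $A_0=\mathbb{R}$ with identity involution, $A_{k+1}=A_k\{\gamma_k\}=A_k\times A_k$ with product $(a,b)(c,d)=(ac+\gamma_k\bar d b,\ da+b\bar c)$ and involution $\overline{(a,b)}=(\bar a,-b)$. A real unital algebra is locally-complex if every non-real element generates a subalgebra isomorphic to $\mathbb{C}$ (for Cayley--Dickson algebras: all $\gamma_k=-1$ up to isomorphism). Trace $\mathrm{tr}(\lambda)=\lambda+\bar\lambda\in\mathbb{R}$, norm $\mathrm{n}(\lambda)=\bar\lambda\lambda\in\mathbb{R}$, characteristic polynomial $p_\lambda(x)=x^2-\mathrm{tr}(\lambda)x+\mathrm{n}(\lambda)$. $A[x]=A\otimes_{\mathbb{R}}\mathbb{R}[x]$ with central $x$; $f(x)=a_mx^m+\dots+a_0$, $a_k\in A$; substitution $f(r)=\sum_k a_k(r^k)$. A root $\lambda\in A\setminus\mathbb{R}$ of $f$ is spherical if every $r\in A$ with $p_\lambda(r)=0$ is a root of $f$. Elements $r,\lambda$ are quadratically-equivalent if $\mathrm{tr}(r)=\mathrm{tr}(\lambda)$ and $\mathrm{n}(r)=\mathrm{n}(\lambda)$. *)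

(* Defs.v *)
From Stdlib Require Import Reals List Arith.
Open Scope R_scope.

(* Real Cayley--Dickson algebra A_k with all gamma_j = -1
   (the locally-complex ones, up to isomorphism).
   A_0 = R, A_{k+1} = A_k x A_k. *)
Fixpoint CD (k : nat) : Type :=
  match k with
  | O => R
  | S k' => (CD k' * CD k')%type
  end.

Fixpoint cd_zero (k : nat) : CD k :=
  match k return CD k with
  | O => 0
  | S k' => (cd_zero k', cd_zero k')
  end.

Fixpoint cd_real (k : nat) (r : R) : CD k :=
  match k return CD k with
  | O => r
  | S k' => (cd_real k' r, cd_zero k')
  end.

Definition cd_one (k : nat) : CD k := cd_real k 1.

Fixpoint cd_add (k : nat) : CD k -> CD k -> CD k :=
  match k return CD k -> CD k -> CD k with
  | O => Rplus
  | S k' => fun x y => (cd_add k' (fst x) (fst y), cd_add k' (snd x) (snd y))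
  end.

Fixpoint cd_opp (k : nat) : CD k -> CD k :=
  match k return CD k -> CD k with
  | O => Ropp
  | S k' => fun x => (cd_opp k' (fst x), cd_opp k' (snd x))
  end.

Definition cd_sub (k : nat) (x y : CD k) : CD k := cd_add k x (cd_opp k y).

Fixpoint cd_conj (k : nat) : CD k -> CD k :=
  match k return CD k -> CD k with
  | O => fun x => x
  | S k' => fun x => (cd_conj k' (fst x), cd_opp k' (snd x))
  end.

(* product (a,b)(c,d) = (ac + gamma * conj(d) b, d a + b conj(c)), gamma = -1 *)
Fixpoint cd_mul (k : nat) : CD k -> CD k -> CD k :=
  match k return CD k -> CD k -> CD k with
  | O => Rmult
  | S k' => fun x y =>
      let a := fst x in let b := snd x in
      let c := fst y in let d := snd y in
      (cd_sub k' (cd_mul k' a c) (cd_mul k' (cd_conj k' d) b),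
       cd_add k' (cd_mul k' d a) (cd_mul k' b (cd_conj k' c)))
  end.

(* powers r^m (Cayley--Dickson algebras are power-associative) *)
Fixpoint cd_pow (k : nat) (r : CD k) (m : nat) : CD k :=
  match m with
  | O => cd_one k
  | S m' => cd_mul k r (cd_pow k r m')
  end.

Definition cd_is_real (k : nat) (x : CD k) : Prop := exists r : R, x = cd_real k r.

Definition cd_tr (k : nat) (l : CD k) : CD k := cd_add k l (cd_conj k l).
Definition cd_norm (k : nat) (l : CD k) : CD k := cd_mul k (cd_conj k l) l.

Definition char_eval (k : nat) (l r : CD k) : CD k :=
  cd_add k (cd_sub k (cd_mul k r r) (cd_mul k (cd_tr k l) r)) (cd_norm k l).

(* polynomials in A[x] with central x: coefficient lists [a_0; a_1; ...; a_m].
   Substitution f(r) = sum_j a_j (r^j). *)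
Fixpoint poly_eval_from (k : nat) (f : list (CD k)) (j : nat) (r : CD k) : CD k :=
  match f with
  | nil => cd_zero k
  | a :: f' => cd_add k (cd_mul k a (cd_pow k r j)) (poly_eval_from k f' (S j) r)
  end.

Definition poly_eval (k : nat) (f : list (CD k)) (r : CD k) : CD k :=
  poly_eval_from k f 0 r.

Definition has_degree (k : nat) (f : list (CD k)) (n : nat) : Prop :=
  length f = S n /\ last f (cd_zero k) <> cd_zero k.

Definition spherical_root (k : nat) (f : list (CD k)) (l : CD k) : Prop :=
  ~ cd_is_real k l /\ poly_eval k f l = cd_zero k /\
  forall r : CD k, char_eval k l r = cd_zero k -> poly_eval k f r = cd_zero k.

Definition quad_equiv (k : nat) (r l : CD k) : Prop :=
  cd_tr k r = cd_tr k l /\ cd_norm k r = cd_norm k l.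

(* Main.v *)
Require Import Defs.
From Stdlib Require Import Reals List Arith.
From Stdlib Require Import Lra Lia Classical.
From HB Require Import structures.
From mathcomp Require ssreflect ssrfun ssrbool eqtype ssrnat seq ssralg poly ssrnum.
From mathcomp Require complex Rstruct.
From mathcomp.algebra_tactics Require ring.
Open Scope R_scope.

Fixpoint cd_scal (k : nat) (c : R) : CD k -> CD k :=
  match k return CD k -> CD k with
  | O => fun x => c * x
  | S k' => fun x => (cd_scal k' c (fst x), cd_scal k' c (snd x))
  end.

Fixpoint coord (k : nat) : CD k -> nat -> R :=
  match k return CD k -> nat -> R with
  | O => fun x i => match i with O => x | S _ => 0 end
  | S k' => fun x i => if Nat.even i then coord k' (fst x) (Nat.div2 i)
                       else coord k' (snd x) (Nat.div2 i)
  end.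

Lemma cd_ext k (x y : CD k) : (forall i, coord k x i = coord k y i) -> x = y.
Proof.
  induction k; simpl.
  - intros H; apply (H 0%nat).
  - destruct x as [a b], y as [c d]; simpl; intros H. f_equal.
    + apply IHk; intro i. generalize (H (2*i)%nat).
      rewrite Nat.even_mul, Nat.div2_double; auto.
    + apply IHk; intro i. generalize (H (S (2*i))%nat).
      replace (Nat.even (S (2*i))) with false.
      2:{ rewrite Nat.even_succ, Nat.odd_mul; reflexivity. }
      rewrite Nat.div2_succ_double; auto.
Qed.

Lemma coord_add k x y i : coord k (cd_add k x y) i = coord k x i + coord k y i.
Proof. revert i; induction k; simpl; intros i.
  - destruct i; [reflexivity|ring].
  - destruct (Nat.even i); auto. Qed.
Lemma coord_opp k x i : coord k (cd_opp k x) i = - coord k x i.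
Proof. revert i; induction k; simpl; intros i.
  - destruct i; [reflexivity|ring].
  - destruct (Nat.even i); auto. Qed.
Lemma coord_scal k c x i : coord k (cd_scal k c x) i = c * coord k x i.
Proof. revert i; induction k; simpl; intros i.
  - destruct i; [reflexivity|ring].
  - destruct (Nat.even i); auto. Qed.
Lemma coord_zero k i : coord k (cd_zero k) i = 0.
Proof. revert i; induction k; simpl; intros i.
  - destruct i; reflexivity.
  - destruct (Nat.even i); auto. Qed.
Lemma real_scal k c : cd_real k c = cd_scal k c (cd_one k).
Proof. unfold cd_one. induction k; simpl.
  - ring.
  - rewrite IHk. f_equal. apply cd_ext; intro i. rewrite coord_scal, !coord_zero; ring. Qed.

Ltac cdext := unfold cd_sub; apply cd_ext; intro;
  repeat rewrite ?coord_add, ?coord_opp, ?coord_scal, ?coord_zero; ring.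

Lemma conj_add k x y : cd_conj k (cd_add k x y) = cd_add k (cd_conj k x) (cd_conj k y).
Proof. induction k; simpl; auto. f_equal; auto. cdext. Qed.
Lemma conj_scal k c x : cd_conj k (cd_scal k c x) = cd_scal k c (cd_conj k x).
Proof. induction k; simpl; auto. f_equal; auto. cdext. Qed.
Lemma conj_opp k x : cd_conj k (cd_opp k x) = cd_opp k (cd_conj k x).
Proof. induction k; simpl; auto. f_equal; auto. Qed.
Lemma conj_zero k : cd_conj k (cd_zero k) = cd_zero k.
Proof. induction k; simpl; auto. f_equal; auto. cdext. Qed.
Lemma conj_real k c : cd_conj k (cd_real k c) = cd_real k c.
Proof. induction k; simpl; auto. f_equal; auto. cdext. Qed.
Lemma conj_conj k x : cd_conj k (cd_conj k x) = x.
Proof. induction k; simpl; auto. destruct x; simpl; f_equal; auto. cdext. Qed.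

Lemma mul_add k : forall x y z,
  cd_mul k (cd_add k x y) z = cd_add k (cd_mul k x z) (cd_mul k y z) /\
  cd_mul k z (cd_add k x y) = cd_add k (cd_mul k z x) (cd_mul k z y).
Proof. induction k; simpl; intros x y z.
  - split; ring.
  - split; f_equal; rewrite ?conj_add, ?(proj1 (IHk _ _ _)), ?(proj2 (IHk _ _ _)); cdext.
Qed.
Lemma mul_add_l k x y z : cd_mul k (cd_add k x y) z = cd_add k (cd_mul k x z) (cd_mul k y z).
Proof. apply mul_add. Qed.
Lemma mul_add_r k x y z : cd_mul k z (cd_add k x y) = cd_add k (cd_mul k z x) (cd_mul k z y).
Proof. apply mul_add. Qed.
Lemma mul_scal k : forall c x y,
  cd_mul k (cd_scal k c x) y = cd_scal k c (cd_mul k x y) /\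
  cd_mul k x (cd_scal k c y) = cd_scal k c (cd_mul k x y).
Proof. induction k; simpl; intros c x y.
  - split; ring.
  - split; f_equal; rewrite ?conj_scal, ?(proj1 (IHk _ _ _)), ?(proj2 (IHk _ _ _)); cdext.
Qed.
Lemma mul_scal_l k c x y : cd_mul k (cd_scal k c x) y = cd_scal k c (cd_mul k x y).
Proof. apply mul_scal. Qed.
Lemma mul_scal_r k c x y : cd_mul k x (cd_scal k c y) = cd_scal k c (cd_mul k x y).
Proof. apply mul_scal. Qed.
Lemma opp_scal k x : cd_opp k x = cd_scal k (-1) x.
Proof. cdext. Qed.
Lemma zero_scal k x : cd_zero k = cd_scal k 0 x.
Proof. cdext. Qed.
Lemma mul_zero_l k x : cd_mul k (cd_zero k) x = cd_zero k.
Proof. rewrite (zero_scal k (cd_zero k)), mul_scal_l. cdext. Qed.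
Lemma mul_zero_r k x : cd_mul k x (cd_zero k) = cd_zero k.
Proof. rewrite (zero_scal k (cd_zero k)), mul_scal_r. cdext. Qed.
Lemma mul_opp_l k x y : cd_mul k (cd_opp k x) y = cd_opp k (cd_mul k x y).
Proof. rewrite !opp_scal, mul_scal_l. reflexivity. Qed.
Lemma mul_opp_r k x y : cd_mul k x (cd_opp k y) = cd_opp k (cd_mul k x y).
Proof. rewrite !opp_scal, mul_scal_r. reflexivity. Qed.
Lemma mul_real k c x : cd_mul k (cd_real k c) x = cd_scal k c x /\ cd_mul k x (cd_real k c) = cd_scal k c x.
Proof. induction k; simpl.
  - split; ring.
  - destruct x as [a b]; simpl. rewrite !conj_real, conj_zero, !mul_zero_l, !mul_zero_r, !(proj1 (IHk _)), !(proj2 (IHk _)).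
    split; f_equal; cdext.
Qed.
Lemma mul_real_l k c x : cd_mul k (cd_real k c) x = cd_scal k c x.
Proof. apply mul_real. Qed.
Lemma mul_real_r k c x : cd_mul k x (cd_real k c) = cd_scal k c x.
Proof. apply mul_real. Qed.

Fixpoint cd_re (k : nat) : CD k -> R :=
  match k return CD k -> R with
  | O => fun x => x
  | S k' => fun x => cd_re k' (fst x)
  end.
Fixpoint cd_nrm (k : nat) : CD k -> R :=
  match k return CD k -> R with
  | O => fun x => x * x
  | S k' => fun x => cd_nrm k' (fst x) + cd_nrm k' (snd x)
  end.

Ltac cdextH H := let i := fresh "i" in
  unfold cd_sub in H; apply cd_ext; intro i; apply (f_equal (fun v => coord _ v i)) in H;
  repeat rewrite ?coord_add, ?coord_opp, ?coord_scal, ?coord_zero in H;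
  repeat rewrite ?coord_add, ?coord_opp, ?coord_scal, ?coord_zero.

Lemma re_add k x y : cd_re k (cd_add k x y) = cd_re k x + cd_re k y.
Proof. induction k; simpl; auto. Qed.
Lemma re_scal k c x : cd_re k (cd_scal k c x) = c * cd_re k x.
Proof. induction k; simpl; auto. Qed.
Lemma re_real k c : cd_re k (cd_real k c) = c.
Proof. induction k; simpl; auto. Qed.
Lemma nrm_zero k : cd_nrm k (cd_zero k) = 0.
Proof. induction k; simpl. lra. rewrite IHk; lra. Qed.
Lemma nrm_real k c : cd_nrm k (cd_real k c) = c * c.
Proof. induction k; simpl. reflexivity. rewrite IHk, nrm_zero. lra. Qed.
Lemma nrm_nonneg k x : 0 <= cd_nrm k x.
Proof. induction k; simpl. nra. specialize (IHk (fst x)) as H1. pose proof (IHk (snd x)). lra. Qed.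
Lemma nrm_eq0 k x : cd_nrm k x = 0 -> x = cd_zero k.
Proof. induction k; simpl; intros H. nra. destruct x as [a b]; simpl in *.
  pose proof (nrm_nonneg k a); pose proof (nrm_nonneg k b). f_equal; apply IHk; lra. Qed.
Lemma re2_le_nrm k x : cd_re k x * cd_re k x <= cd_nrm k x.
Proof. induction k; simpl. lra. pose proof (nrm_nonneg k (snd x)). pose proof (IHk (fst x)). lra. Qed.
Lemma real_iff k x : cd_is_real k x <-> cd_nrm k x = cd_re k x * cd_re k x.
Proof. unfold cd_is_real. split.
  - intros [r ->]. rewrite nrm_real, re_real. auto.
  - intros H. exists (cd_re k x). induction k; simpl in *. auto.
    destruct x as [a b]; simpl in *.
    pose proof (nrm_nonneg k b). pose proof (re2_le_nrm k a).
    f_equal. apply IHk; lra. apply nrm_eq0; lra. Qed.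

Lemma tr_real k l : cd_tr k l = cd_real k (2 * cd_re k l).
Proof. unfold cd_tr. induction k; simpl. lra. destruct l as [a b]; simpl. rewrite IHk. f_equal. cdext. Qed.
Lemma norm_real k l : cd_norm k l = cd_real k (cd_nrm k l).
Proof. unfold cd_norm. induction k; simpl. lra. destruct l as [a b]; simpl.
  rewrite IHk, mul_opp_r, IHk, mul_opp_l. f_equal.
  - rewrite !real_scal. cdext.
  - cdext. Qed.

Lemma char_self k l : char_eval k l l = cd_zero k.
Proof. unfold char_eval, cd_tr, cd_norm. rewrite mul_add_l. cdext. Qed.

Lemma sq_lin k r : cd_mul k r r = cd_add k (cd_scal k (2 * cd_re k r) r) (cd_real k (- cd_nrm k r)).
Proof. pose proof (char_self k r) as H. unfold char_eval in H.
  rewrite tr_real, norm_real, mul_real_l in H. rewrite !real_scal in *. cdextH H.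
  lra. Qed.

Fixpoint ab (t m : R) (j : nat) : R * R :=
  match j with
  | O => (0, 1)
  | S j' => let p := ab t m j' in (t * fst p + snd p, - m * fst p)
  end.

Lemma pow_lin k t m r j :
  cd_mul k r r = cd_add k (cd_scal k t r) (cd_real k (- m)) ->
  cd_pow k r j = cd_add k (cd_scal k (fst (ab t m j)) r) (cd_real k (snd (ab t m j))).
Proof. intros H. induction j; simpl.
  - unfold cd_one. rewrite !real_scal. cdext.
  - rewrite IHj, mul_add_r, mul_scal_r, mul_real_r, H. rewrite !real_scal. cdext. Qed.

Fixpoint Aof k t m (s : nat) (f : list (CD k)) : CD k :=
  match f with
  | nil => cd_zero k
  | a :: f' => cd_add k (cd_scal k (fst (ab t m s)) a) (Aof k t m (S s) f')
  end.
Fixpoint Bof k t m (s : nat) (f : list (CD k)) : CD k :=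
  match f with
  | nil => cd_zero k
  | a :: f' => cd_add k (cd_scal k (snd (ab t m s)) a) (Bof k t m (S s) f')
  end.

Lemma eval_lin k t m r f s :
  cd_mul k r r = cd_add k (cd_scal k t r) (cd_real k (- m)) ->
  poly_eval_from k f s r = cd_add k (cd_mul k (Aof k t m s f) r) (Bof k t m s f).
Proof. intros H. revert s; induction f as [|a f IH]; intros s; simpl.
  - rewrite mul_zero_l. cdext.
  - rewrite IH, (pow_lin k t m r s H), mul_add_r, mul_scal_r, mul_real_r, mul_add_l, mul_scal_l. cdext. Qed.

Fixpoint rAs (t m : R) (s : nat) (g : list R) : R :=
  match g with nil => 0 | a :: g' => fst (ab t m s) * a + rAs t m (S s) g' end.
Fixpoint rBs (t m : R) (s : nat) (g : list R) : R :=
  match g with nil => 0 | a :: g' => snd (ab t m s) * a + rBs t m (S s) g' end.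

Lemma coord_Aof k t m s f i : coord k (Aof k t m s f) i = rAs t m s (map (fun a => coord k a i) f).
Proof. revert s; induction f; intros s; simpl. apply coord_zero. rewrite coord_add, coord_scal, IHf; auto. Qed.
Lemma coord_Bof k t m s f i : coord k (Bof k t m s f) i = rBs t m s (map (fun a => coord k a i) f).
Proof. revert s; induction f; intros s; simpl. apply coord_zero. rewrite coord_add, coord_scal, IHf; auto. Qed.

Lemma mul_pair k a b c d : cd_mul (S k) (a, b) (c, d) =
  (cd_sub k (cd_mul k a c) (cd_mul k (cd_conj k d) b), cd_add k (cd_mul k d a) (cd_mul k b (cd_conj k c))).
Proof. reflexivity. Qed.
Lemma sub_zero_r k x : cd_sub k x (cd_zero k) = x.
Proof. cdext. Qed.
Lemma add_zero_l k x : cd_add k (cd_zero k) x = x.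
Proof. cdext. Qed.
Fixpoint E (k : nat) : CD (S k) :=
  match k return CD (S k) with
  | O => (0, 1)
  | S k' => (E k', cd_zero (S k'))
  end.

Lemma re_E k : cd_re (S k) (E k) = 0.
Proof. induction k; simpl in *; auto. Qed.
Lemma nrm_E k : cd_nrm (S k) (E k) = 1.
Proof. induction k. simpl; lra. change (cd_nrm (S k) (E k) + cd_nrm (S k) (cd_zero (S k)) = 1).
  rewrite IHk, nrm_zero; lra. Qed.
Lemma conj_E k : cd_conj (S k) (E k) = cd_opp (S k) (E k).
Proof. induction k. simpl. f_equal; lra. change ((cd_conj (S k) (E k), cd_opp (S k) (cd_zero (S k))) = (cd_opp (S k) (E k), cd_opp (S k) (cd_zero (S k)))).
  rewrite IHk; auto. Qed.
Lemma mul_EE k x : cd_mul (S k) (cd_mul (S k) x (E k)) (E k) = cd_opp (S k) x.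
Proof. induction k.
  - destruct x as [a b]; simpl in *. unfold cd_sub; simpl. f_equal; match goal with |- @eq _ ?x ?y => change (@eq R x y) end; ring.
  - destruct x as [a b].
    change (E (S k)) with (E k, cd_zero (S k)).
    rewrite ?mul_pair, ?conj_zero, ?mul_zero_l, ?mul_zero_r, ?sub_zero_r, ?add_zero_l.
    rewrite conj_E, !mul_opp_r, mul_opp_l, IHk, IHk. change (cd_opp (S (S k)) (a,b)) with (cd_opp (S k) a, cd_opp (S k) b). f_equal. cdext.
Qed.

Definition count_hyp (g : list R) (L : list (R * R)) : Prop :=
  forall p, In p L -> 0 < snd p /\
    rAs (2 * fst p) (fst p * fst p + snd p * snd p) 0 g = 0 /\
    rBs (2 * fst p) (fst p * fst p + snd p * snd p) 0 g = 0.
Definition last_nz (g : list R) : Prop := last g 0 <> 0.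

Lemma nrm_add_real k c y : cd_nrm k (cd_add k (cd_real k c) y) = c*c + 2*c*cd_re k y + cd_nrm k y.
Proof. induction k; simpl. ring. rewrite IHk, add_zero_l. ring. Qed.
Lemma nrm_scal k c y : cd_nrm k (cd_scal k c y) = c*c*cd_nrm k y.
Proof. induction k; simpl. ring. rewrite !IHk. ring. Qed.

Lemma sphere_AB k (f : list (CD (S k))) (l : CD (S k)) :
  spherical_root (S k) f l ->
  Aof (S k) (2 * cd_re (S k) l) (cd_nrm (S k) l) 0 f = cd_zero (S k) /\
  Bof (S k) (2 * cd_re (S k) l) (cd_nrm (S k) l) 0 f = cd_zero (S k).
Proof.
  intros [Hnr [_ Hsph]].
  set (c := cd_re (S k) l) in *. set (m := cd_nrm (S k) l) in *.
  assert (Hm : c * c < m).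
  { pose proof (re2_le_nrm (S k) l). destruct (Req_dec m (c*c)) as [He|He].
    - exfalso; apply Hnr, real_iff. exact He.
    - unfold c, m in *; lra. }
  set (A := Aof (S k) (2 * c) m 0 f). set (B := Bof (S k) (2 * c) m 0 f).
  assert (Hpt : forall s, s * s = m - c * c ->
     cd_add (S k) (cd_add (S k) (cd_scal (S k) c A) (cd_scal (S k) s (cd_mul (S k) A (E k)))) B = cd_zero (S k)).
  { intros s Hs.
    set (r := cd_add (S k) (cd_real (S k) c) (cd_scal (S k) s (E k))).
    assert (Hre : cd_re (S k) r = c).
    { unfold r. rewrite re_add, re_real, re_scal, re_E. ring. }
    assert (Hn : cd_nrm (S k) r = m).
    { unfold r. rewrite nrm_add_real, re_scal, re_E, nrm_scal, nrm_E. lra. }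
    assert (Hsq : cd_mul (S k) r r = cd_add (S k) (cd_scal (S k) (2 * c) r) (cd_real (S k) (- m))).
    { rewrite sq_lin, Hre, Hn. reflexivity. }
    assert (Hch : char_eval (S k) l r = cd_zero (S k)).
    { rewrite <- (char_self (S k) r). unfold char_eval.
      rewrite !tr_real, !norm_real, Hre, Hn. reflexivity. }
    pose proof (Hsph r Hch) as H0. unfold poly_eval in H0.
    rewrite (eval_lin (S k) (2 * c) m r f 0 Hsq) in H0. fold A B in H0.
    unfold r in H0. rewrite mul_add_r, mul_real_r, mul_scal_r in H0. exact H0. }
  assert (Hrho := sqrt_pos (m - c * c)).
  assert (Hrr := sqrt_sqrt (m - c * c) ltac:(lra)).
  set (rho := sqrt (m - c * c)) in *.
  assert (Hrho0 : rho <> 0).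
  { intro H0. rewrite H0 in Hrr. lra. }
  pose proof (Hpt rho Hrr) as H1.
  pose proof (Hpt (- rho) ltac:(lra)) as H2.
  assert (HAE : cd_mul (S k) A (E k) = cd_zero (S k)).
  { apply cd_ext; intro i.
    apply (f_equal (fun v => coord _ v i)) in H1.
    apply (f_equal (fun v => coord _ v i)) in H2.
    rewrite !coord_add, !coord_scal, !coord_zero in H1, H2.
    rewrite coord_zero. apply (Rmult_eq_reg_l rho); [lra | auto]. }
  assert (HA : A = cd_zero (S k)).
  { pose proof (mul_EE k A) as H3. rewrite HAE, mul_zero_l in H3.
    apply cd_ext; intro i. apply (f_equal (fun v => coord _ v i)) in H3.
    rewrite coord_opp, coord_zero in H3. rewrite coord_zero. lra. }
  split; [exact HA|].
  rewrite HAE, HA in H1. apply cd_ext; intro i. apply (f_equal (fun v => coord _ v i)) in H1.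
  rewrite !coord_add, !coord_scal, !coord_zero in H1. rewrite coord_zero. lra.
Qed.

Module MC.
Import ssreflect ssrfun ssrbool eqtype ssrnat seq ssralg poly ssrnum complex Rstruct.
Import ring.
Import GRing.Theory Num.Theory.
Local Open Scope ring_scope.
Local Open Scope complex_scope.

Lemma sqz (c b m : R) : m = (c * c + b * b)%R ->
  (c +i* b) * (c +i* b) = (2 * c)%R%:C * (c +i* b) - m%:C.
Proof.
move=> ->. simpc. apply/eqP; rewrite eq_complex /=.
apply/andP; split; apply/eqP; ring.
Qed.


Lemma powz (z : R[i]) (t m : R) : z * z = t%:C * z - m%:C -> forall j,
  z ^+ j = (fst (ab t m j))%:C * z + (snd (ab t m j))%:C.
Proof.
move=> hz; elim=> [|j IH].
  by rewrite expr0 /= rmorph0 mul0r add0r rmorph1.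
rewrite exprS IH /=.
rewrite ?RmultE ?RplusE ?RoppE !rmorphD !rmorphM rmorphN.
transitivity ((fst (ab t m j))%:C * (z * z) + (snd (ab t m j))%:C * z); first by ring.
rewrite hz. ring.
Qed.

Lemma hornerz (z : R[i]) (t m : R) : z * z = t%:C * z - m%:C -> forall g j,
  horner_rec (map (real_complex R) g) z * z ^+ j =
  (rAs t m j g)%:C * z + (rBs t m j g)%:C.
Proof.
move=> hz; elim=> [|a g IH] j /=.
  by rewrite mul0r rmorph0 mul0r add0r.
rewrite ?RmultE ?RplusE !rmorphD !rmorphM.
transitivity (horner_rec [seq x%:C | x <- g] z * z ^+ j.+1 + a%:C * z ^+ j).
  by rewrite exprS; ring.
rewrite IH (powz z t m hz). ring.
Qed.


Lemma inP' (T : eqType) (x : T) (s : seq T) : x \in s -> List.In x s.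
Proof.
elim: s => //= a s IH; rewrite in_cons => /orP [/eqP ->|/IH]; by [left|right].
Qed.

Lemma nodup_uniq (T : eqType) (s : seq T) : List.NoDup s -> uniq s.
Proof.
elim: s => //= a s IH H; inversion H; subst.
apply/andP; split; last by apply: IH.
by apply/negP => /inP'.
Qed.

Lemma last_bridge (T : Type) (g : list T) d : List.last g d = seq.last d g.
Proof. elim: g d => //= a g IH d. case: g IH => //= b g IH. Qed.

Lemma size_length (T : Type) (g : list T) : size g = length g.
Proof. by elim: g => //= a g ->. Qed.

Lemma count_roots (g : list R) (n : nat) (L : list (R * R)) :
  length g = S n -> last_nz g -> List.NoDup L -> count_hyp g L ->
  Peano.le (Nat.mul 2 (length L)) n.
Proof.
move=> hlen hlast hnd hc.
set s := map (real_complex R) g.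
have hl : seq.last 0 s != 0.
  rewrite -(rmorph0 (real_complex R)) /s last_map fmorph_eq0.
  apply/eqP => h; apply: hlast. by rewrite last_bridge.
set P := Poly s.
have hP : P = s :> seq _ by rewrite /P (PolyK hl).
have hsz : size P = n.+1 by rewrite hP /s size_map size_length hlen.
have hP0 : P != 0 by rewrite -size_poly_eq0 hsz.
set rs := [seq (p.1 +i* p.2) | p <- L] ++ [seq (p.1 +i* (- p.2)) | p <- L].
have hroot : forall p b, List.In p L -> (b = p.2 \/ b = - p.2) -> root P (p.1 +i* b).
  move=> p b hp hb. have [h0 [hA hB]] := hc p hp.
  have hz : (p.1 +i* b) * (p.1 +i* b) = (2 * p.1)%R%:C * (p.1 +i* b) - (p.1 * p.1 + p.2 * p.2)%R%:C.
    apply: sqz. case: hb => ->; rewrite ?RmultE ?RplusE ?RoppE; ring.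
  rewrite /root /P horner_Poly -[horner_rec _ _]mulr1 -(expr0 (p.1 +i* b)) /s.
  rewrite (hornerz _ _ _ hz g 0) hA hB.
  by rewrite rmorph0 mul0r addr0.
have hall : all (root P) rs.
  rewrite all_cat !all_map; apply/andP; split; apply/allP => p /inP' hp /=;
  apply: hroot => //; by [left|right].
have huniq : uniq rs.
  rewrite cat_uniq !map_inj_uniq; first last.
  - by move=> [a b] [c d] /= [-> h]; congr pair; rewrite -[b]opprK h opprK.
  - by move=> [a b] [c d] /= [-> h]; congr pair; rewrite -[b]opprK h opprK.
  rewrite nodup_uniq // andbT /=.
  apply/hasPn => x /mapP [p hp ->]; apply/negP => /mapP [q hq] [_ hpq].
  have [hp0 _] := hc p (@inP' _ _ _ hp). have [hq0 _] := hc q (@inP' _ _ _ hq).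
  move: hp0 hq0 hpq; rewrite -RoppE; lra.
have := max_poly_roots hP0 hall huniq.
rewrite hsz /rs size_cat !size_map size_length => /ltP. lia.
Qed.

End MC.

Lemma last_map' {A B} (h : A -> B) (l : list A) d : last (map h l) (h d) = h (last l d).
Proof. induction l as [|a l IH]; simpl; auto. destruct l; simpl in *; auto. Qed.

Lemma equiv_re_nrm k l c : quad_equiv k l c -> cd_re k l = cd_re k c /\ cd_nrm k l = cd_nrm k c.
Proof. intros [Ht Hn]. rewrite !tr_real in Ht. rewrite !norm_real in Hn.
  apply (f_equal (cd_re k)) in Ht. apply (f_equal (cd_re k)) in Hn. rewrite !re_real in Ht, Hn. split; lra. Qed.

Lemma re_nrm_equiv k l c : cd_re k l = cd_re k c -> cd_nrm k l = cd_nrm k c -> quad_equiv k l c.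
Proof. intros H1 H2. split. rewrite !tr_real, H1; auto. rewrite !norm_real, H2; auto. Qed.

Lemma class_inv k f l c : spherical_root k f c -> quad_equiv k l c -> spherical_root k f l.
Proof.
  intros [Hnr [H0 Hs]] Heq.
  assert (Hch : forall r, char_eval k l r = char_eval k c r).
  { intros r. unfold char_eval. destruct Heq as [Ht Hn]. rewrite Ht, Hn. reflexivity. }
  split; [|split].
  - intros Hr. apply Hnr. apply real_iff in Hr. apply real_iff.
    destruct (equiv_re_nrm k l c Heq) as [E1 E2]. rewrite <- E1, <- E2. exact Hr.
  - apply Hs. rewrite <- Hch. apply char_self.
  - intros r Hr. apply Hs. rewrite <- Hch. exact Hr.
Qed.

Fixpoint good k (f : list (CD k)) (L : list (CD k)) : Prop :=
  match L with
  | nil => True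
  | x :: L' => spherical_root k f x /\ (forall y, In y L' -> ~ quad_equiv k x y) /\ good k f L'
  end.

Definition img k (l : CD k) : R * R := (cd_re k l, sqrt (cd_nrm k l - cd_re k l * cd_re k l)).

Lemma img_inj k l c : img k l = img k c -> quad_equiv k l c.
Proof. unfold img. intros H. injection H as H1 H2.
  pose proof (re2_le_nrm k l). pose proof (re2_le_nrm k c).
  apply (f_equal (fun x => x * x)) in H2. rewrite !sqrt_sqrt in H2 by lra.
  rewrite H1 in H2. apply re_nrm_equiv; lra. Qed.

Lemma good_nodup k f L : good k f L -> NoDup (map (img k) L).
Proof. induction L as [|x L IH]; simpl; intros H. constructor.
  destruct H as [_ [Hn Hg]]. constructor; auto.
  intros Hin. apply in_map_iff in Hin. destruct Hin as [y [Hy Hin]].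
  apply (Hn y Hin). apply img_inj. auto. Qed.

Lemma good_bound k f n L : has_degree (S k) f n -> good (S k) f L -> (2 * length L <= n)%nat.
Proof.
  intros [Hlen Hlast] Hg.
  assert (Hi : exists i, coord (S k) (last f (cd_zero (S k))) i <> 0).
  { apply NNPP. intros Hn. apply Hlast. apply cd_ext. intro i. rewrite coord_zero.
    apply NNPP. intro H. apply Hn. exists i. exact H. }
  destruct Hi as [i Hi].
  set (g := map (fun a => coord (S k) a i) f).
  assert (Hc : count_hyp g (map (img (S k)) L)).
  { intros p Hp. apply in_map_iff in Hp. destruct Hp as [l [<- Hl]].
    assert (Hsl : spherical_root (S k) f l).
    { clear -Hg Hl. induction L; simpl in *; [contradiction|]. destruct Hg as [H1 [_ H2]].
      destruct Hl as [<-|Hl]; auto. }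
    unfold img; cbn [fst snd].
    pose proof (re2_le_nrm (S k) l) as Hle.
    assert (Hnr : cd_re (S k) l * cd_re (S k) l < cd_nrm (S k) l).
    { destruct (Rle_lt_or_eq_dec _ _ Hle) as [Hlt|He]; [exact Hlt|].
      exfalso. apply (proj1 Hsl). apply real_iff. symmetry; exact He. }
    rewrite sqrt_sqrt by lra.
    replace (cd_re (S k) l * cd_re (S k) l + (cd_nrm (S k) l - cd_re (S k) l * cd_re (S k) l))
      with (cd_nrm (S k) l) by ring.
    destruct (sphere_AB k f l Hsl) as [HA HB].
    split; [apply sqrt_lt_R0; lra|].
    unfold g. rewrite <- coord_Aof, <- coord_Bof, HA, HB, coord_zero. split; reflexivity. }
  assert (Hl : last_nz g).
  { unfold last_nz. pose proof (last_map' (fun a => coord (S k) a i) f (cd_zero (S k))) as E1. cbv beta in E1. rewrite coord_zero in E1. unfold g. rewrite E1. exact Hi. }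
  assert (Hlg : length g = S n) by (unfold g; rewrite length_map; exact Hlen).
  pose proof (MC.count_roots g n _ Hlg Hl (good_nodup _ _ _ Hg) Hc) as H.
  rewrite length_map in H. exact H.
Qed.

Lemma good_in k f L c : good k f L -> In c L -> spherical_root k f c.
Proof. induction L; simpl; intros Hg Hin; [contradiction|]. destruct Hg as [H1 [_ H2]].
  destruct Hin as [<-|Hin]; auto. Qed.

Theorem corollary3p14 (k n : nat) (f : list (CD k)) :
  has_degree k f n ->
  exists reps : list (CD k),
    (length reps <= Nat.div n 2)%nat /\
    forall l : CD k,
      spherical_root k f l <-> exists c, In c reps /\ quad_equiv k l c.
Proof.
  intros Hdeg. destruct k as [|k].
  - exists nil. split; [simpl; lia|]. intros l; split.
    + intros [Hnr _]. exfalso. apply Hnr. exists l. reflexivity.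
    + intros [c [[] _]].
  - assert (Hex : exists L, good (S k) f L /\
       forall x, spherical_root (S k) f x -> exists c, In c L /\ quad_equiv (S k) x c).
    { apply NNPP. intros Hno.
      assert (Hall : forall m, exists L, good (S k) f L /\ length L = m).
      { induction m as [|m [L [HL Hlen]]].
        - exists nil; simpl; auto.
        - assert (Hx : exists x, spherical_root (S k) f x /\ ~ exists c, In c L /\ quad_equiv (S k) x c).
          { apply NNPP. intros Hn. apply Hno. exists L. split; auto.
            intros x Hx. apply NNPP. intros Hc. apply Hn. exists x. auto. }
          destruct Hx as [x [Hx Hc]]. exists (x :: L). split; [|change (S (length L) = S m); rewrite Hlen; reflexivity]. simpl.
          split; [exact Hx|]. split; [|exact HL].
          intros y Hy Hq. apply Hc. exists y. auto. }
      destruct (Hall (S n)) as [L [HL Hlen]].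
      pose proof (good_bound k f n L Hdeg HL). lia. }
    destruct Hex as [L [HL Hmax]]. exists L. split.
    + apply Nat.div_le_lower_bound; [lia|]. apply (good_bound k f n L Hdeg HL).
    + intros l; split; [apply Hmax|].
      intros [c [Hin Hq]]. apply (class_inv _ _ _ c); auto. apply (good_in _ _ L); auto.
Qed.
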